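(* For $|q|<1$ and every integer $n\ge1$, $$\frac{1}{(n)_{q^2}!\,(n+1)_{q^2}!}=(1-q^2)^n\sum_{0\le\lambda_n\le\lambda_{n-1}\le\dots\le\lambda_1}C_{\lambda}(q)\,q^{4(\lambda_1+2\lambda_2+\dots+n\lambda_n)},$$ where the sum runs over all $n$-tuples of nonnegative integers $\lambda_1\ge\dots\ge\lambda_n\ge0$, and $C_\lambda(q)=\prod_{i}\frac{1}{(m_i)_{q^2}!}$, where $m_1,m_2,\dots$ are the multiplicities of the distinct values occurring among $\lambda_1,\dots,\lambda_n$ (zeros included).
   Context: $(a)_{q^2}=\frac{q^{2a}-1}{q^2-1}$, $(a)_{q^2}!=(1)_{q^2}(2)_{q^2}\cdots(a)_{q^2}$, $(0)_{q^2}!=1$. Equivalently $C_\lambda(q)=\prod_{i\ge0}\frac1{(\lambda'_i-\lambda'_{i+1})_{q^2}!}$ with $\lambda'_0=n$ and $\lambda'_j=\#\{k:\lambda_k\ge j\}$ for $j\ge1$. *)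

(* Defs.v *)
From HB Require Import structures.
From mathcomp Require Import all_boot all_order all_algebra.
From mathcomp Require Import complex.
From mathcomp Require Import all_classical all_reals all_analysis.
Set Implicit Arguments. Unset Strict Implicit. Unset Printing Implicit Defensive.
Import Order.TTheory GRing.Theory Num.Theory.
Import numFieldNormedType.Exports.
Local Open Scope ring_scope.

Definition qint2 (F : fieldType) (q : F) (a : nat) : F :=
  (q ^+ (2 * a) - 1) / (q ^+ 2 - 1).

Definition qfact2 (F : fieldType) (q : F) (a : nat) : F :=
  \prod_(1 <= i < a.+1) qint2 q i.

Definition Clam (F : fieldType) (q : F) (lam : seq nat) : F :=
  \prod_(v <- undup lam) (qfact2 q (count_mem v lam))^-1.

Definition lam_weight (lam : seq nat) : nat :=
  \sum_(i < size lam) (i.+1 * nth 0 lam i)%N.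

Definition part_sum (F : fieldType) (n N : nat) (q : F) : F :=
  \sum_(t : n.-tuple 'I_N.+1 | sorted geq (map val t))
     Clam q (map val t) * q ^+ (4 * lam_weight (map val t)).

(* The complex numbers over R, viewed as a numFieldType so that the
   normed topology of MathComp-Analysis (numFieldNormedType) applies. *)
Definition Cplx (R : realType) : numFieldType := R[i].

(* Main.v *)
Require Import Defs.
From HB Require Import structures.
From mathcomp Require Import all_boot all_order all_algebra.
From mathcomp Require Import complex.
From mathcomp Require Import all_classical all_reals all_analysis.
From mathcomp.algebra_tactics Require Import ring.
From mathcomp.zify Require Import zify.
Import Order.TTheory GRing.Theory Num.Theory.
Import numFieldNormedType.Exports.
Set Implicit Arguments. Unset Strict Implicit. Unset Printing Implicit Defensive.

Fixpoint decs (N n : nat) : seq (seq nat) :=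
  match N with
  | 0 => [:: nseq n 0]
  | N'.+1 => flatten [seq [seq map succn s ++ nseq (n - k) 0 | s <- decs N' k]
                     | k <- iota 0 n.+1]
  end.

Lemma geq_trans' : transitive geq.
Proof. by move=> a b c /= h1 h2; apply: leq_trans h2 h1. Qed.

Lemma split_dec (s : seq nat) : pairwise geq s ->
  s = [seq x <- s | 0 < x] ++ [seq x <- s | x == 0].
Proof.
elim: s => //= v s IH /andP[Hall Hp].
case: v Hall => [|v] Hall /=.
- have Hz : all (pred1 0) s.
    by apply/allP => x /(allP Hall); rewrite /= leqn0.
  have -> : [seq x <- s | 0 < x] = [::].
    rewrite (@eq_in_filter _ _ pred0) ?filter_pred0 //.
    by move=> x /(allP Hz) /eqP ->.
  by rewrite (all_filterP Hz).
- by rewrite {1}(IH Hp).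
Qed.

Lemma pairwise_nseq0 n : pairwise geq (nseq n 0).
Proof. by elim: n => //= n ->; rewrite andbT all_nseq orbT. Qed.

Lemma decsP N n s : (s \in decs N n) = [&& size s == n, sorted geq s & all (fun v => v <= N) s].
Proof.
rewrite sorted_pairwise; last exact: geq_trans'.
elim: N n s => [|N IH] n s.
- rewrite inE; apply/eqP/idP => [->|/and3P[/eqP <- _ Ha]].
    by rewrite size_nseq eqxx /= all_nseq /= pairwise_nseq0 orbT.
  apply/all_pred1P; apply: sub_all Ha => x /=; rewrite leqn0.
    by [].
- apply/flatten_mapP/idP.
  + move=> [k]; rewrite mem_iota add0n ltnS => /andP[_ Hk] /mapP[t].
    rewrite IH => /and3P[/eqP Ht Hp Ha] ->.
    rewrite size_cat size_map size_nseq Ht subnKC // eqxx /=.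
    apply/andP; split.
      rewrite pairwise_cat pairwise_map pairwise_nseq0 andbT; apply/andP; split.
      * apply/allrelP => x y _; rewrite mem_nseq => /andP[_ /eqP ->] //.
      * by apply: sub_pairwise Hp => a b.
    * rewrite all_cat all_map; apply/andP; split.
        by apply: sub_all Ha => x /=.
      by apply/allP => x; rewrite mem_nseq => /andP[_ /eqP ->].
  + move=> /and3P[/eqP Hs Hp Ha].
    set t := [seq x <- s | 0 < x].
    exists (size t).
      by rewrite mem_iota add0n ltnS -Hs size_filter count_size.
    apply/mapP; exists (map predn t).
      rewrite IH size_map eqxx /= pairwise_map all_map; apply/andP; split.
        apply: sub_pairwise (pairwise_filter _ Hp) => a b /= h; rewrite -!subn1 leq_sub2r //.
      apply/allP => x; rewrite mem_filter => /andP[_ /(allP Ha) /=].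
      by rewrite -subn1 leq_subLR add1n.
    rewrite -map_comp map_id_in; last first.
      by move=> x; rewrite mem_filter => /andP[/prednK + _].
    rewrite [s in LHS](split_dec Hp); congr (_ ++ _).
    have Hz : all (pred1 0) [seq x <- s | x == 0] by apply/allP => x; rewrite mem_filter => /andP[].
    rewrite (all_pred1P _ _ Hz); congr nseq.
    rewrite -Hs !size_filter -(count_predC (fun x => 0 < x) s) addKn.
    by apply: eq_count => x /=; rewrite lt0n negbK.
Qed.

Lemma filter_pos_dec t m :
  [seq x <- map succn t ++ nseq m 0 | 0 < x] = map succn t.
Proof.
rewrite filter_cat (all_filterP (_ : all _ (map succn t))); last by rewrite all_map; apply/allP.
by rewrite (@eq_in_filter _ _ pred0) ?filter_pred0 ?cats0 // => x; rewrite mem_nseq => /andP[_ /eqP ->].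
Qed.

Lemma decs_uniq N n : uniq (decs N n).
Proof.
elim: N n => [|N IH] n //=.
change (uniq [seq map succn s ++ nseq (n - k) 0 | k <- iota 0 n.+1, s <- decs N k]).
apply: allpairs_uniq_dep; first exact: iota_uniq.
  by move=> k _.
move=> [k1 t1] [k2 t2] /allpairsPdep[a1 [b1 [_ Hb1 [-> ->]]]] /allpairsPdep[a2 [b2 [_ Hb2 [-> ->]]]] /=.
move=> E; have := congr1 (seq.filter (fun x => 0 < x)) E; rewrite !filter_pos_dec => /inj_map E2.
have {E2} E2 := E2 succn_inj; subst b2.
move: Hb1 Hb2; rewrite !decsP => /andP[/eqP <- _] /andP[/eqP -> _].
by [].
Qed.

Local Open Scope ring_scope.

Section Comb.
Variables (F : fieldType) (q : F).


Lemma qfact20 : qfact2 q 0 = 1.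
Proof. by rewrite /qfact2 big_geq. Qed.

Lemma Clam_ord s B : all (fun v => (v < B)%N) s ->
  Clam q s = \prod_(v < B) (qfact2 q (count_mem (v : nat) s))^-1.
Proof.
move=> HB; rewrite -(big_mkord xpredT (fun v => (qfact2 q (count_mem v s))^-1)).
rewrite (bigID (fun v : nat => v \in s)) /=.
rewrite [X in _ * X]big1 ?mulr1; last first.
  by move=> v /count_memPn ->; rewrite qfact20 invr1.
rewrite -big_filter /Clam; apply: esym; apply: perm_big.
apply: uniq_perm; last 1 first.
  move=> v; rewrite mem_undup mem_filter mem_iota add0n.
  by rewrite subn0; case Hv: (v \in s) => //=; rewrite (allP HB v Hv).
  by rewrite filter_uniq // iota_uniq.
exact: undup_uniq.
Qed.

Lemma mem_le_sumn (t : seq nat) v : v \in t -> (v <= sumn t)%N.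
Proof.
elim: t => //= a t IH; rewrite inE => /orP[/eqP ->|/IH h]; first exact: leq_addr.
exact: leq_trans h (leq_addl _ _).
Qed.

Lemma Clam_shift t m : Clam q (map succn t ++ nseq m 0%N) = Clam q t * (qfact2 q m)^-1.
Proof.
pose B := (sumn t).+1.
have HB : all (fun v => (v < B)%N) t by apply/allP => v /mem_le_sumn.
rewrite (Clam_ord HB) (@Clam_ord _ B.+1); last first.
  rewrite all_cat all_map; apply/andP; split; first exact: HB.
  by apply/allP => v; rewrite mem_nseq => /andP[_ /eqP ->].
rewrite big_ord_recl mulrC; congr (_ * _).
  apply: eq_bigr => i _; congr (_^-1); congr qfact2.
  rewrite count_cat count_map count_nseq /= addn0; apply: eq_count => x /=.
  by rewrite /bump leq0n add1n eqSS.
rewrite count_cat count_map count_nseq /= mul1n.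
rewrite (@eq_count _ _ pred0) ?count_pred0 //.
Qed.

Lemma weight_shift t m : lam_weight (map succn t ++ nseq m 0%N) =
  (lam_weight t + \sum_(i < size t) i.+1)%N.
Proof.
rewrite /lam_weight size_cat size_map size_nseq big_split_ord /=.
rewrite [X in (_ + X)%N]big1 ?addn0; last first.
  move=> i _; rewrite nth_cat size_map ltnNge leq_addr /= addKn nth_nseq.
  by case: ifP; rewrite muln0.
rewrite -big_split /=; apply: eq_bigr => i _.
by rewrite nth_cat size_map ltn_ord (nth_map 0%N) // mulnSr.
Qed.

Lemma tri k : ((\sum_(i < k) i.+1) * 2 = k * k.+1)%N.
Proof.
elim: k => [|k IH]; first by rewrite big_ord0.
rewrite big_ord_recr /= mulnDl IH; lia.
Qed.

Definition Fw (s : seq nat) : F := Clam q s * q ^+ (4 * lam_weight s).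

Lemma Fw_shift t m : Fw (map succn t ++ nseq m 0%N) =
  (qfact2 q m)^-1 * q ^+ (2 * (size t * (size t).+1)) * Fw t.
Proof.
rewrite /Fw Clam_shift weight_shift -tri.
have -> : (4 * (lam_weight t + \sum_(i < size t) i.+1) =
   2 * ((\sum_(i < size t) i.+1) * 2) + 4 * lam_weight t)%N by lia.
rewrite exprD; ring.
Qed.

Lemma part_sum_decs n N : part_sum n N q = \sum_(s <- decs N n) Fw s.
Proof.
rewrite /part_sum.
rewrite -(big_map (fun t : n.-tuple 'I_N.+1 => map val t) (fun s => sorted geq s) Fw).
rewrite -big_filter; apply: perm_big.
apply: uniq_perm.
- rewrite filter_uniq // map_inj_uniq ?index_enum_uniq //.
  by move=> t1 t2 /inj_map E; apply: val_inj; apply: E; apply: val_inj.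
- exact: decs_uniq.
move=> s; rewrite decsP mem_filter andbC; apply/idP/idP.
- move=> /andP[/mapP[t _ ->] ->]; rewrite size_map size_tuple eqxx /=.
  by rewrite all_map; apply/allP => i _ /=; rewrite -ltnS.
- move=> /and3P[/eqP Hs Hso Ha]; rewrite Hso andbT.
  have Hsz : size (map (@inord N) s) == n by rewrite size_map Hs.
  apply/mapP; exists (Tuple Hsz); first by rewrite mem_index_enum.
  rewrite /= -map_comp map_id_in // => v /(allP Ha) Hv /=.
  by rewrite inordK // ltnS.
Qed.

Lemma part_sum0 n : part_sum n 0 q = (qfact2 q n)^-1.
Proof.
rewrite part_sum_decs /= big_seq1.
have -> : nseq n 0%N = map succn [::] ++ nseq n 0%N by [].
rewrite Fw_shift /Fw /Clam /lam_weight /= big_nil big_ord0.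
by rewrite !muln0 expr0 mul1r !mulr1.
Qed.

Lemma part_sum_rec n N : part_sum n N.+1 q =
  \sum_(k < n.+1) (qfact2 q (n - k))^-1 * q ^+ (2 * (k * k.+1)) * part_sum k N q.
Proof.
rewrite part_sum_decs.
have -> : decs N.+1 n = flatten [seq [seq map succn s ++ nseq (n - k) 0 | s <- decs N k] | k <- iota 0 n.+1] by [].
rewrite big_flatten big_map -(big_mkord xpredT (fun k => (qfact2 q (n - k))^-1 * q ^+ (2 * (k * k.+1)) * part_sum k N q)).
apply: eq_bigr => k _; rewrite big_map part_sum_decs mulr_sumr.
rewrite big_seq [RHS]big_seq; apply: eq_bigr => s; rewrite decsP => /andP[/eqP Hs _].
by rewrite Fw_shift Hs.
Qed.
End Comb.

Section Alg.
Variables (F : fieldType) (q : F).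
Let x := q ^+ 2.
Hypothesis Hx : forall i, (0 < i)%N -> x ^+ i != 1.

Lemma x1 : x - 1 != 0.
Proof. by rewrite subr_eq0 -(expr1 x) Hx. Qed.

Lemma qintE i : qint2 q i = (x ^+ i - 1) / (x - 1).
Proof. by rewrite /qint2 exprM. Qed.

Lemma qint_neq0 i : (0 < i)%N -> qint2 q i != 0.
Proof. by move=> hi; rewrite qintE mulf_neq0 ?invr_eq0 ?x1 // subr_eq0 Hx. Qed.

Lemma qfS k : qfact2 q k.+1 = qfact2 q k * qint2 q k.+1.
Proof. by rewrite /qfact2 big_nat_recr. Qed.

Lemma qf0 : qfact2 q 0 = 1.
Proof. by rewrite /qfact2 big_geq. Qed.

Lemma qf_neq0 k : qfact2 q k != 0.
Proof.
elim: k => [|k IH]; first by rewrite qf0 oner_eq0.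
by rewrite qfS mulf_neq0 // qint_neq0.
Qed.

Lemma omx_qint j : (1 - x) * qint2 q j = 1 - x ^+ j.
Proof.
rewrite qintE; have := x1 => h; field.
exact: h.
Qed.

Definition qb n k := if (k <= n)%N then qfact2 q n / (qfact2 q k * qfact2 q (n - k)) else 0.

Lemma qb0 n : qb n 0 = 1.
Proof. by rewrite /qb leq0n subn0 qf0 mul1r divff // qf_neq0. Qed.

Lemma qb_gt n k : (n < k)%N -> qb n k = 0.
Proof. by rewrite /qb ltnNge => /negbTE ->. Qed.

Lemma pascal n k : (k <= n)%N -> qb n.+1 k.+1 = qb n k.+1 + x ^+ (n - k) * qb n k.
Proof.
move=> hk; rewrite /qb ltnS hk.
case: (ltnP k n) => hkn; last first.
  have -> : n = k by apply/eqP; rewrite eqn_leq hk hkn.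
  rewrite !subnn qf0 expr0 !mulr1 mul1r !divff ?qf_neq0 //.
  by rewrite add0r.

have [m Em] : exists m, n = (k + m.+1)%N by exists (n - k.+1)%N; lia.
subst n.
have -> : ((k + m.+1).+1 - k.+1 = m.+1)%N by lia.
have -> : ((k + m.+1) - k.+1 = m)%N by lia.
have -> : ((k + m.+1) - k = m.+1)%N by lia.
rewrite !qfS !qintE.
have Hx1 := x1; have Hk := Hx (ltn0Sn k); have Hm := Hx (ltn0Sn m).
have Ha := qf_neq0 k; have Hb := qf_neq0 m; have Hc := qf_neq0 (k + m.+1).
have -> : x ^+ (k + m.+1).+1 = x ^+ k.+1 * x ^+ m.+1 by rewrite -exprD; congr (_ ^+ _); lia.
rewrite /x in Hx1 Hk Hm *.
set X := q ^+ 2 in Hx1 Hk Hm *.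
set A := X ^+ k.+1 in Hk *. set B := X ^+ m.+1 in Hm *.
rewrite -!/(qfact2 q _).
by field; rewrite Hx1 Ha Hb !subr_eq0 Hk Hm.
Qed.

Definition poch (a : F) m := \prod_(i < m) (1 - a * x ^+ i).

Lemma pochS a m : poch a m.+1 = poch a m * (1 - a * x ^+ m).
Proof. by rewrite /poch big_ord_recr. Qed.

Lemma poch_qf m k : poch (x ^+ 2 * x ^+ k) m * qfact2 q k.+1 = (1 - x) ^+ m * qfact2 q (k.+1 + m).
Proof.
elim: m => [|m IH]; first by rewrite /poch big_ord0 mul1r expr0 mul1r addn0.
rewrite pochS addnS (qfS (k.+1 + m)) (exprS (1 - x) m).
transitivity (poch (x ^+ 2 * x ^+ k) m * qfact2 q k.+1 * (1 - x ^+ 2 * x ^+ k * x ^+ m)); first ring.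
rewrite IH -!exprD; have -> : (2 + k + m = (k.+1 + m).+1)%N by lia.
rewrite -omx_qint; ring.
Qed.

Definition Fz n (z : F) := \sum_(k < n.+1) qb n k * x ^+ (k * k.-1) * z ^+ k * poch (z * x ^+ k) (n - k).

Lemma Fz1 n z : Fz n z = 1.
Proof.
elim: n z => [|n IH] z.
  by rewrite /Fz big_ord1 qb0 /poch big_ord0 !expr0 !mulr1.
pose C k := x ^+ (k * k.-1) * z ^+ k * poch (z * x ^+ k) (n.+1 - k).
have E0 : Fz n.+1 z = \sum_(k < n.+2) qb n k * C k + \sum_(k < n.+2) (qb n.+1 k - qb n k) * C k.
  rewrite -big_split /Fz; apply: eq_bigr => k _ /=; rewrite /C; ring.
have EA : \sum_(k < n.+2) qb n k * C k = (1 - z * x ^+ n) * Fz n z.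
  rewrite big_ord_recr /= qb_gt // mul0r addr0 /Fz mulr_sumr; apply: eq_bigr => k _.
  have hk : (k <= n)%N by rewrite -ltnS.
  rewrite /C subSn // pochS.
  rewrite -[z * x ^+ k * _]mulrA -exprD subnKC //; ring.
have EB : \sum_(k < n.+2) (qb n.+1 k - qb n k) * C k = z * x ^+ n * Fz n (z * x).
  rewrite big_ord_recl /= !qb0 subrr mul0r add0r /Fz mulr_sumr; apply: eq_bigr => j _.
  have hj : (j <= n)%N by rewrite -ltnS.
  rewrite /bump /= add1n pascal // addrC addKr /C subSS.
  have -> : z * x ^+ j.+1 = z * x * x ^+ j by rewrite exprS mulrA [z * x]mulrC.
  have Ee : (n - j + j.+1 * j.+1.-1 = n + j * j.-1 + j)%N.
    case: (j : nat) hj => [|i] hi /=; first by rewrite !muln0 !addn0 subn0.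
    nia.
  transitivity (qb n j * poch (z * x * x ^+ j) (n - j) * z ^+ j.+1 * (x ^+ (n - j) * x ^+ (j.+1 * j.+1.-1))); first ring.
  rewrite -exprD Ee !exprD [(z * x) ^+ j]exprMn [z ^+ j.+1]exprS; ring.
by rewrite E0 EA EB !IH; ring.
Qed.

Lemma Lrec n : (qfact2 q n * qfact2 q n.+1)^-1 = \sum_(k < n.+1)
  (1 - x) ^+ (n - k) * (qfact2 q (n - k))^-1 * x ^+ (k * k.+1) * (qfact2 q k * qfact2 q k.+1)^-1.
Proof.
transitivity ((qfact2 q n * qfact2 q n.+1)^-1 * Fz n (x ^+ 2)); first by rewrite Fz1 mulr1.
rewrite /Fz mulr_sumr; apply: eq_bigr => k _.
have hk : (k <= n)%N by rewrite -ltnS.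
have P := poch_qf (n - k) k.
have E1 : (k.+1 + (n - k) = n.+1)%N by lia.
rewrite E1 in P.
have Ep : poch (x ^+ 2 * x ^+ k) (n - k) = (1 - x) ^+ (n - k) * qfact2 q n.+1 / qfact2 q k.+1.
  by rewrite -P mulfK ?qf_neq0.
rewrite Ep /qb hk.
have Ee : x ^+ (k * k.-1) * (x ^+ 2) ^+ k = x ^+ (k * k.+1).
  rewrite -exprM -exprD; congr (_ ^+ _); case: (k : nat) => [|i] //=; nia.
rewrite -Ee.
have h1 := qf_neq0 n; have h2 := qf_neq0 n.+1; have h3 := qf_neq0 k; have h4 := qf_neq0 k.+1;
  have h5 := qf_neq0 (n - k).
field.
by rewrite h1 h2 h3 h4 h5.
Qed.
End Alg.

Section Bound.
Variables (K : numFieldType) (q : K).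
Hypothesis Hq : `|q| < 1.
Let x := q ^+ 2.

Lemma Hxi i : (0 < i)%N -> x ^+ i != 1.
Proof.
move=> hi; apply/eqP => h; have := congr1 Num.norm h.
rewrite normr1 normrX normrX -exprM => h2.
have : `|q| ^+ (2 * i) < 1 by rewrite exprn_ilt1 // muln_eq0 negb_or /= -lt0n.
by rewrite h2 ltxx.
Qed.

Definition Vseq N n := (1 - x) ^+ n * part_sum n N q.
Definition Llim n := (qfact2 q n * qfact2 q n.+1)^-1.
Definition ccoef n k := (1 - x) ^+ (n - k) * (qfact2 q (n - k))^-1 * x ^+ (k * k.+1).
Definition Eerr N n := Vseq N n - Llim n.

Lemma Vrec N n : Vseq N.+1 n = \sum_(k < n.+1) ccoef n k * Vseq N k.
Proof.
rewrite /Vseq part_sum_rec mulr_sumr; apply: eq_bigr => k _.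
have hk : (k <= n)%N by rewrite -ltnS.
rewrite /ccoef /x -exprM.
have -> : (1 - q ^+ 2) ^+ n = (1 - q ^+ 2) ^+ (n - k) * (1 - q ^+ 2) ^+ k by rewrite -exprD subnK.
ring.
Qed.

Lemma Lrec' n : Llim n = \sum_(k < n.+1) ccoef n k * Llim k.
Proof. exact: (Lrec Hxi). Qed.

Lemma Erec N n : Eerr N.+1 n = \sum_(k < n.+1) ccoef n k * Eerr N k.
Proof.
rewrite /Eerr Vrec Lrec' -sumrB; apply: eq_bigr => k _; ring.
Qed.

Lemma E0 N : Eerr N 0 = 0.
Proof.
rewrite /Eerr /Vseq /Llim expr0 mul1r qf0 mul1r qfS qf0 mul1r qintE.
rewrite expr1 divff ?invr1; last exact: x1 Hxi.
elim: N => [|N IH]; first by rewrite part_sum0 qf0 invr1 subrr.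
rewrite part_sum_rec big_ord1 /= subn0 qf0 invr1 mul1r mul0n expr0 mul1r.
exact: IH.
Qed.

Let a := `|x|.
Definition rho := (a + 1) / 2.

Lemma a_ge0 : 0 <= a. Proof. exact: normr_ge0. Qed.
Lemma a_lt1 : a < 1.
Proof. by rewrite /a /x normrX exprn_ilt1. Qed.
Lemma a_lt_rho : a < rho. Proof. exact: (midf_lt a_lt1).1. Qed.
Lemma rho_lt1 : rho < 1. Proof. exact: (midf_lt a_lt1).2. Qed.
Lemma rho_ge0 : 0 <= rho. Proof. exact: le_trans a_ge0 (ltW a_lt_rho). Qed.

Lemma norm_cnn n : (0 < n)%N -> `|ccoef n n| <= a.
Proof.
move=> hn; rewrite /ccoef subnn expr0 qf0 invr1 !mul1r normrX.
case: n hn => [//|n] _; rewrite mulSn exprD exprS -!mulrA.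
apply: ler_piMr; first exact: a_ge0.
apply: mulr_ile1; try (apply: exprn_ge0; exact: a_ge0).
all: apply: exprn_ile1; [exact: a_ge0 | exact: ltW a_lt1].
Qed.

Lemma bound n : exists2 C, 0 <= C & forall k, (k <= n)%N -> forall N, `|Eerr N k| <= C * rho ^+ N.
Proof.
have rN N : 0 <= rho ^+ N by apply: exprn_ge0; exact: rho_ge0.
elim: n => [|n [C C0 HC]].
  by exists 0 => // k; rewrite leqn0 => /eqP -> N; rewrite E0 normr0 mul0r.
set A := \sum_(k < n.+1) `|ccoef n.+1 k| * C.
have A0 : 0 <= A by apply: sumr_ge0 => k _; rewrite mulr_ge0.
have ra : 0 < rho - a by rewrite subr_gt0 a_lt_rho.
set D := C + `|Eerr 0 n.+1| + A / (rho - a).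
have AD : A / (rho - a) <= D by apply: ler_wpDl => //; rewrite addr_ge0.
have D0 : 0 <= D by apply: le_trans AD; rewrite divr_ge0 // ltW.
have HD : forall N, `|Eerr N n.+1| <= D * rho ^+ N.
  elim => [|N IH].
    rewrite expr0 mulr1 /D; apply: ler_wpDr; first by rewrite divr_ge0 // ltW.
    by apply: ler_wpDl.
  rewrite Erec big_ord_recr /=.
  apply: le_trans (ler_normD _ _) _.
  have h1 : `|\sum_(i < n.+1) ccoef n.+1 i * Eerr N i| <= A * rho ^+ N.
    apply: le_trans (ler_norm_sum _ _ _) _.
    rewrite /A mulr_suml; apply: ler_sum => i _.
    rewrite normrM -mulrA; apply: ler_wpM2l; first exact: normr_ge0.
    by apply: HC; rewrite -ltnS.
  have h2 : `|ccoef n.+1 n.+1 * Eerr N n.+1| <= a * (D * rho ^+ N).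
    rewrite normrM; apply: ler_pM; [exact: normr_ge0|exact: normr_ge0|exact: norm_cnn|exact: IH].
  apply: le_trans (lerD h1 h2) _.
  have -> : A * rho ^+ N + a * (D * rho ^+ N) = (A + a * D) * rho ^+ N by ring.
  have -> : D * rho ^+ N.+1 = (rho * D) * rho ^+ N by rewrite exprS; ring.
  apply: ler_wpM2r => //.
  rewrite -(subrK (a * D) (rho * D)) -mulrBl lerD2r mulrC -ler_pdivrMr //.
exists D => // k; rewrite leq_eqVlt => /orP[/eqP ->|hk] N; first exact: HD.
apply: le_trans (HC k hk N) _; apply: ler_wpM2r => //.
by rewrite /D -addrA; apply: ler_wpDr => //; rewrite addr_ge0 // divr_ge0 // ltW.
Qed.
End Bound.

Local Open Scope classical_set_scope.
Local Open Scope ring_scope.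

Lemma real_of_ge0 {R : realType} {z : Cplx R} : 0 <= z -> exists r : R, z = (r%:C)%C.
Proof. by move=> /ger0_real /complex_realP. Qed.

Lemma geo_cvg (R : realType) (u : nat -> Cplx R) (l C rho : Cplx R) :
  0 <= rho -> rho < 1 -> 0 <= C -> (forall N, `|u N - l| <= C * rho ^+ N) ->
  u @ \oo --> l.
Proof.
move=> r0 r1 c0 H.
have [r Er] := real_of_ge0 r0; have [c Ec] := real_of_ge0 c0; subst rho C.
move: r0 r1 c0; rewrite !lecE !ltcE /= => /andP[_ r0] /andP[_ r1] /andP[_ c0].
apply/(@cvgrPdist_le _ (Cplx R)) => eps eps0.
have [e Ee] := real_of_ge0 (ltW eps0); subst eps.
move: eps0; rewrite ltcE /= => /andP[_ e0].
have rr : `|r| < 1 by rewrite ger0_norm.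
have ec : (0 < e / (c + 1))%R by rewrite divr_gt0 // ltr_wpDl.
have Hn := (cvgr0Pnorm_le _).1 (cvg_expr rr) _ ec.
near=> N.
have hN : `|r ^+ N| <= e / (c + 1) by near: N; exact: Hn.
rewrite distrC; apply: le_trans (H N) _.
have -> : (c%:C * r%:C ^+ N = (c * r ^+ N)%:C)%C by rewrite rmorphM rmorphXn.
rewrite lecR; rewrite ger0_norm ?exprn_ge0 // in hN.
apply: le_trans (ler_wpM2l c0 hN) _.
rewrite mulrA ler_pdivrMr ?ltr_wpDl // mulrDr mulr1 mulrC lerDl ltW //.
Unshelve. all: end_near.
Qed.


Unset Implicit Arguments.
Local Open Scope classical_set_scope.
Local Open Scope ring_scope.

Theorem mainTheorem12 (R : realType) (q : Cplx R) (n : nat) :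
  `|q| < 1 -> (0 < n)%N ->
  (fun N : nat => (1 - q ^+ 2) ^+ n * part_sum n N q) @ \oo -->
    (qfact2 q n * qfact2 q n.+1)^-1.
Proof.
move=> Hq _.
have [C C0 HC] := bound Hq n.
apply: (@geo_cvg R _ ((qfact2 q n * qfact2 q n.+1)^-1) C (rho q) (rho_ge0 Hq) (rho_lt1 Hq) C0) => N.
exact: (HC n (leqnn n) N).
Qed.
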